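(* Let $M\ge1$ and let $\tau\in\mathbb{R}^{M+2}_{>0}$ be an $(M+1)$-layer travel time vector such that the set $$S=\{k\in\mathfrak{L}^\tau_{M+1}: k\neq k^{M+1},\ \langle k,\tau\rangle=\langle k^{M+1},\tau\rangle\}$$ is nonempty, where $k^{M+1}=(1,\ldots,1)\in\mathbb{Z}^{M+2}$. Let $\mathcal{R}$ be the set of all $(R_0,\ldots,R_M)\in(-1,1)^{M+1}$ for which there exists a nonzero $R_{M+1}\in(-1,1)$ such that, with $R'=(R_0,\ldots,R_{M+1})$, $$a(R',k^{M+1})+\sum_{k\in S}a(R',k)=0.$$ Then $\mathcal{R}$ has strictly positive Lebesgue measure in $\mathbb{R}^{M+1}$.
   Context: For $N\ge1$, $\mathfrak{L}_N\subset\mathbb{Z}^{N+1}_{\geq0}$ is the set of $k=(k_0,\ldots,k_N)$ with $k_0=1$ such that $k_n>0\Rightarrow k_{n-1}>0$ for $1\le n\le N$; for $\tau\in\mathbb{R}^{N+1}_{>0}$, $\mathfrak{L}^\tau_N=\{k\in\mathfrak{L}_N:\langle k,\tau\rangle\le\langle\mathbb{1},\tau\rangle\}$. Amplitude polynomial (for $k\in\mathfrak{L}_N$, $x=(x_0,\ldots,x_N)$): $\mathbb{1}=(1,\ldots,1)$; inequalities and $\min$ entrywise; $x^k=\prod_n x_n^{k_n}$, $\binom{k}{b}=\prod_n\binom{k_n}{b_n}$; $\tilde k=(k_1,\ldots,k_N,0)$, $u=\min\{\mathbb{1},\tilde k\}$, $V(k)=\{b:u\le b\le\min\{k,\tilde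 k\}\}$, $a(x,k)=\sum_{b\in V(k)}\binom{k}{b}\binom{\tilde k-u}{b-u}(-x)^{\tilde k-b}x^{k-b}\prod_n(1-x_n^2)^{b_n}$. *)

(* Defs.v *)
From Stdlib Require Import Reals List Arith.
Import ListNotations.
Open Scope R_scope.

(* A multi-index k = (k_0,...,k_N) is a list of naturals of length N+1;
   k_n = nth n k 0.  Real vectors x = (x_0,x_1,...) are functions nat -> R. *)

Definition kth (k : list nat) (n : nat) : nat := nth n k 0%nat.

Definition prodR (n : nat) (f : nat -> R) : R := fold_right Rmult 1 (map f (seq 0 n)).
Definition sumR (n : nat) (f : nat -> R) : R := fold_right Rplus 0 (map f (seq 0 n)).
Definition sumL {A} (l : list A) (f : A -> R) : R := fold_right Rplus 0 (map f l).

Fixpoint boxes (lo hi : list nat) : list (list nat) :=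
  match lo, hi with
  | l :: lo', h :: hi' =>
      flat_map (fun j => map (cons j) (boxes lo' hi')) (seq l (S h - l))
  | _, _ => [nil]
  end.

Definition inL (N : nat) (k : list nat) : Prop :=
  length k = S N /\ kth k 0 = 1%nat /\
  (forall n, (1 <= n <= N)%nat -> (0 < kth k n)%nat -> (0 < kth k (n - 1))%nat).

Definition dotk (k : list nat) (tau : nat -> R) : R :=
  sumR (length k) (fun n => INR (kth k n) * tau n).

Definition ones (N : nat) : list nat := repeat 1%nat (S N).

Definition inLtau (N : nat) (tau : nat -> R) (k : list nat) : Prop :=
  inL N k /\ dotk k tau <= dotk (ones N) tau.

Definition ktil (k : list nat) (n : nat) : nat := kth k (S n).   (* k~ = (k_1,..,k_N,0) *)
Definition uvec (k : list nat) (n : nat) : nat := Nat.min 1 (ktil k n).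

Definition ampl (x : nat -> R) (k : list nat) : R :=
  let d := length k in
  let lo := map (uvec k) (seq 0 d) in
  let hi := map (fun n => Nat.min (kth k n) (ktil k n)) (seq 0 d) in
  sumL (boxes lo hi) (fun b =>
    prodR d (fun n =>
      let kn := kth k n in let tn := ktil k n in let un := uvec k n in
      let bn := kth b n in
      C kn bn * C (tn - un) (bn - un) * (- x n) ^ (tn - bn) * (x n) ^ (kn - bn)
        * (1 - (x n) ^ 2) ^ bn)).

(* Lebesgue outer measure on R^d (points are functions nat -> R, only the
   coordinates 0..d-1 matter): E has positive outer measure iff there is
   eps > 0 such that every countable cover of E by closed boxes
   prod_{i<d} [lo j i, hi j i] has total volume >= eps. *)
Definition box_vol (d : nat) (lo hi : nat -> R) : R := prodR d (fun i => hi i - lo i).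

Definition positive_outer_measure (d : nat) (E : (nat -> R) -> Prop) : Prop :=
  exists eps : R, 0 < eps /\
    forall lo hi : nat -> nat -> R,
      (forall j i, (i < d)%nat -> lo j i <= hi j i) ->
      (forall x, E x -> exists j, forall i, (i < d)%nat -> lo j i <= x i <= hi j i) ->
      exists n, eps <= sumR n (fun j => box_vol d (lo j) (hi j)).

(* Main.v *)
Require Import Defs.
From Stdlib Require Import Reals List Arith Lia Lra ZArith.
Import ListNotations.
Open Scope R_scope.

Lemma prodR_S n f : prodR (S n) f = prodR n f * f n.
Proof.
  unfold prodR. rewrite seq_S, map_app, fold_right_app. simpl.
  generalize (map f (seq 0 n)). intro l. induction l; simpl. ring. rewrite IHl. ring.
Qed.

Lemma sumR_S n f : sumR (S n) f = sumR n f + f n.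
Proof.
  unfold sumR. rewrite seq_S, map_app, fold_right_app. simpl.
  generalize (map f (seq 0 n)). intro l. induction l; simpl. ring. rewrite IHl. ring.
Qed.

Lemma prodR_shift n f : prodR (S n) f = f O * prodR n (fun i => f (S i)).
Proof.
  unfold prodR. simpl. f_equal. rewrite <- seq_shift, map_map. reflexivity.
Qed.

Lemma sumR_shift n f : sumR (S n) f = f O + sumR n (fun i => f (S i)).
Proof.
  unfold sumR. simpl. f_equal. rewrite <- seq_shift, map_map. reflexivity.
Qed.

Lemma prodR_ext n f g : (forall i, (i < n)%nat -> f i = g i) -> prodR n f = prodR n g.
Proof.
  induction n; intros H. reflexivity.
  rewrite !prodR_S, IHn by (intros; apply H; lia). rewrite H by lia. reflexivity.
Qed.

Lemma sumR_ext n f g : (forall i, (i < n)%nat -> f i = g i) -> sumR n f = sumR n g.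
Proof.
  induction n; intros H. reflexivity.
  rewrite !sumR_S, IHn by (intros; apply H; lia). rewrite H by lia. reflexivity.
Qed.

Lemma sumR_plus n f g : sumR n (fun i => f i + g i) = sumR n f + sumR n g.
Proof. induction n. unfold sumR; simpl; ring. rewrite !sumR_S, IHn. ring. Qed.

Lemma sumR_scal n c f : sumR n (fun i => c * f i) = c * sumR n f.
Proof. induction n. unfold sumR; simpl; ring. rewrite !sumR_S, IHn. ring. Qed.

Lemma sumR_0 f : sumR 0 f = 0.
Proof. reflexivity. Qed.
Lemma prodR_0 f : prodR 0 f = 1.
Proof. reflexivity. Qed.

Lemma prodR_mult n f g : prodR n (fun i => f i * g i) = prodR n f * prodR n g.
Proof. induction n. unfold prodR; simpl; ring. rewrite !prodR_S, IHn. ring. Qed.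

Lemma sumR_nonneg n f : (forall i, (i < n)%nat -> 0 <= f i) -> 0 <= sumR n f.
Proof.
  induction n; intros H. unfold sumR; simpl; lra.
  rewrite sumR_S. assert (0 <= f n) by (apply H; lia).
  assert (0 <= sumR n f) by (apply IHn; intros; apply H; lia). lra.
Qed.

Lemma sumR_le n f g : (forall i, (i < n)%nat -> f i <= g i) -> sumR n f <= sumR n g.
Proof.
  induction n; intros H. unfold sumR; simpl; lra.
  rewrite !sumR_S. assert (f n <= g n) by (apply H; lia).
  assert (sumR n f <= sumR n g) by (apply IHn; intros; apply H; lia). lra.
Qed.

Lemma prodR_nonneg n f : (forall i, (i < n)%nat -> 0 <= f i) -> 0 <= prodR n f.
Proof.
  induction n; intros H. unfold prodR; simpl; lra.
  rewrite prodR_S. apply Rmult_le_pos. apply IHn; intros; apply H; lia. apply H; lia.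
Qed.

Lemma prodR_pos n f : (forall i, (i < n)%nat -> 0 < f i) -> 0 < prodR n f.
Proof.
  induction n; intros H. unfold prodR; simpl; lra.
  rewrite prodR_S. apply Rmult_lt_0_compat. apply IHn; intros; apply H; lia. apply H; lia.
Qed.

Lemma sumR_mono_n n m f : (n <= m)%nat -> (forall i, 0 <= f i) -> sumR n f <= sumR m f.
Proof.
  intros Hnm Hf. induction Hnm. lra. rewrite sumR_S. specialize (Hf m). lra.
Qed.

Lemma sumR_ge_term n f j : (j < n)%nat -> (forall i, 0 <= f i) -> f j <= sumR n f.
Proof.
  intros Hj Hf. apply Rle_trans with (sumR (S j) f).
  rewrite sumR_S. assert (0 <= sumR j f) by (apply sumR_nonneg; auto). lra.
  apply sumR_mono_n; auto.
Qed.

Lemma sumR_swap n m (f : nat -> nat -> R) :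
  sumR n (fun i => sumR m (fun j => f i j)) = sumR m (fun j => sumR n (fun i => f i j)).
Proof.
  induction n. rewrite sumR_0. symmetry. induction m. reflexivity. rewrite sumR_S, IHm, sumR_0. ring.
  rewrite sumR_S, IHn. rewrite <- sumR_plus. apply sumR_ext. intros. rewrite sumR_S. ring.
Qed.

Lemma sumR_zero_all n f : (forall i, (i < n)%nat -> 0 <= f i) -> sumR n f = 0 ->
  forall i, (i < n)%nat -> f i = 0.
Proof.
  induction n; intros H0 Hs i Hi. lia.
  rewrite sumR_S in Hs.
  assert (0 <= sumR n f) by (apply sumR_nonneg; intros; apply H0; lia).
  assert (0 <= f n) by (apply H0; lia).
  destruct (Nat.eq_dec i n). subst. lra.
  apply IHn; try lia; try lra. intros; apply H0; lia.
Qed.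

Lemma sumL_app {A} (l1 l2 : list A) f : sumL (l1 ++ l2) f = sumL l1 f + sumL l2 f.
Proof. induction l1; unfold sumL in *; simpl. ring. rewrite IHl1. ring. Qed.

Lemma sumL_flat_map {A B} (g : A -> list B) l f :
  sumL (flat_map g l) f = sumL l (fun j => sumL (g j) f).
Proof. induction l; unfold sumL in *; simpl. reflexivity. rewrite <- IHl.
  fold (sumL (g a) f). fold (sumL (flat_map g l) f). apply sumL_app. Qed.

Lemma sumL_map {A B} (h : A -> B) l f : sumL (map h l) f = sumL l (fun x => f (h x)).
Proof. unfold sumL. rewrite map_map. reflexivity. Qed.

Lemma sumL_scal {A} (l : list A) c f : sumL l (fun x => c * f x) = c * sumL l f.
Proof. induction l; unfold sumL in *; simpl. ring. rewrite IHl. ring. Qed.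

Lemma sumL_scal_r {A} (l : list A) c f : sumL l (fun x => f x * c) = sumL l f * c.
Proof. induction l; unfold sumL in *; simpl. ring. rewrite IHl. ring. Qed.

Lemma sumL_ext {A} (l : list A) f g : (forall x, In x l -> f x = g x) -> sumL l f = sumL l g.
Proof. induction l; intros H; unfold sumL in *; simpl. reflexivity.
  rewrite H by (left; auto). rewrite IHl. reflexivity. intros; apply H; right; auto. Qed.

Lemma sumL_plus {A} (l : list A) f g : sumL l (fun x => f x + g x) = sumL l f + sumL l g.
Proof. induction l; unfold sumL in *; simpl. ring. rewrite IHl. ring. Qed.

Lemma boxes_prod : forall lo hi (G : nat -> nat -> R), length lo = length hi ->
  sumL (boxes lo hi) (fun b => prodR (length lo) (fun n => G n (kth b n))) =
  prodR (length lo) (fun n => sumL (seq (kth lo n) (S (kth hi n) - kth lo n)) (G n)).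
Proof.
  induction lo as [|l lo IH]; intros hi G Hlen; destruct hi as [|h hi]; simpl in Hlen; try lia.
  - simpl. unfold sumL, prodR. simpl. ring.
  - simpl (boxes _ _). rewrite sumL_flat_map. simpl length.
    rewrite prodR_shift. unfold kth at 2 3; simpl nth.
    rewrite <- sumL_scal_r. apply sumL_ext. intros j _.
    rewrite sumL_map.
    change (fun i : nat => sumL (seq (kth (l :: lo) (S i)) (S (kth (h :: hi) (S i)) - kth (l :: lo) (S i))) (G (S i)))
      with (fun i : nat => sumL (seq (kth lo i) (S (kth hi i) - kth lo i)) (G (S i))).
    rewrite <- (IH hi (fun n => G (S n))) by lia.
    rewrite <- sumL_scal. apply sumL_ext. intros b _.
    rewrite prodR_shift. reflexivity.
Qed.

Definition phi (p q : nat) (x : R) : R :=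
  sumL (seq (Nat.min 1 q) (S (Nat.min p q) - Nat.min 1 q))
   (fun b => C p b * C (q - Nat.min 1 q) (b - Nat.min 1 q) * (- x) ^ (q - b) * x ^ (p - b)
              * (1 - x ^ 2) ^ b).

Lemma nth_map_seq (f : nat -> nat) d n : (n < d)%nat -> nth n (map f (seq 0 d)) 0%nat = f n.
Proof.
  intros H. rewrite nth_indep with (d' := f 0%nat) by (rewrite length_map, length_seq; lia).
  rewrite map_nth, seq_nth by lia. reflexivity.
Qed.

Lemma ampl_prod x k : ampl x k = prodR (length k) (fun n => phi (kth k n) (kth k (S n)) (x n)).
Proof.
  unfold ampl. cbv zeta.
  set (d := length k).
  set (lo := map (uvec k) (seq 0 d)).
  set (hi := map (fun n => Nat.min (kth k n) (ktil k n)) (seq 0 d)).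
  assert (Hl : length lo = d) by (unfold lo; rewrite length_map, length_seq; auto).
  pose (G := fun n bn => C (kth k n) bn * C (ktil k n - uvec k n) (bn - uvec k n) *
       (- x n) ^ (ktil k n - bn) * x n ^ (kth k n - bn) * (1 - x n ^ 2) ^ bn).
  transitivity (sumL (boxes lo hi) (fun b => prodR (length lo) (fun n => G n (kth b n)))).
  { rewrite Hl. reflexivity. }
  rewrite (boxes_prod lo hi G) by (unfold lo, hi; rewrite !length_map, !length_seq; auto).
  rewrite Hl. apply prodR_ext. intros n Hn.
  assert (E1 : kth lo n = uvec k n) by exact (nth_map_seq _ d n Hn).
  assert (E2 : kth hi n = Nat.min (kth k n) (ktil k n)) by exact (nth_map_seq (fun n => Nat.min (kth k n) (ktil k n)) d n Hn).
  rewrite E1, E2.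
  unfold phi, G, uvec, ktil. reflexivity.
Qed.

Lemma nth_repeat_lt {A} (a d : A) m n : (n < m)%nat -> nth n (repeat a m) d = a.
Proof. revert n; induction m; intros n H. lia. destruct n; simpl; auto. apply IHm; lia. Qed.

Lemma nth_beyond {A} (l : list A) n d : (length l <= n)%nat -> nth n l d = d.
Proof. revert n; induction l; intros n H; destruct n; simpl in *; auto; try lia. apply IHl; lia. Qed.

Lemma kth_ones N n : (n < S N)%nat -> kth (ones N) n = 1%nat.
Proof. intros; unfold kth, ones; apply nth_repeat_lt; auto. Qed.

Lemma kth_ones_out N n : (S N <= n)%nat -> kth (ones N) n = 0%nat.
Proof. intros; unfold kth, ones; apply nth_beyond; rewrite repeat_length; auto. Qed.

Lemma C_pos n k : 0 < C n k.
Proof. unfold C. apply Rdiv_lt_0_compat. apply INR_fact_lt_0. apply Rmult_lt_0_compat; apply INR_fact_lt_0. Qed.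

Lemma last_zero M tau k : (forall n, (n <= S M)%nat -> 0 < tau n) ->
  inL (S M) k -> k <> ones (S M) -> dotk k tau = dotk (ones (S M)) tau -> kth k (S M) = 0%nat.
Proof.
  intros Htau [Hlen [Hk0 HL]] Hne Hdot.
  destruct (Nat.eq_dec (kth k (S M)) 0) as [Hke|Hke]; auto. exfalso.
  assert (Hpos : forall i, (i <= S M)%nat -> (0 < kth k (S M - i))%nat).
  { induction i; intros Hi. rewrite Nat.sub_0_r; lia.
    replace (S M - S i)%nat with (S M - i - 1)%nat by lia.
    apply HL. lia. apply IHi; lia. }
  assert (Hpos' : forall n, (n <= S M)%nat -> (1 <= kth k n)%nat).
  { intros n Hn. replace n with (S M - (S M - n))%nat by lia. apply Hpos. lia. }
  unfold dotk in Hdot. rewrite Hlen in Hdot. unfold ones in Hdot. rewrite repeat_length in Hdot.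
  rewrite (sumR_ext _ (fun n => INR (kth (repeat 1%nat (S (S M))) n) * tau n) (fun n => tau n)) in Hdot.
  2:{ intros i Hi. change (kth (repeat 1%nat (S (S M))) i) with (kth (ones (S M)) i).
       rewrite kth_ones by lia. rewrite INR_1. apply Rmult_1_l. }
  assert (Hz : sumR (S (S M)) (fun n => (INR (kth k n) - 1) * tau n) = 0).
  { rewrite (sumR_ext _ _ (fun n => INR (kth k n) * tau n + (-1) * tau n)) by (intros; ring).
    rewrite sumR_plus, sumR_scal, Hdot. change (sumR (S (S M)) (fun n : nat => tau n)) with (sumR (S (S M)) tau). lra. }
  assert (Hnn : forall i, (i < S (S M))%nat -> 0 <= (INR (kth k i) - 1) * tau i).
  { intros i Hi. apply Rmult_le_pos.
    assert (INR 1 <= INR (kth k i)) by (apply le_INR; apply Hpos'; lia). rewrite INR_1 in H. lra.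
    left; apply Htau; lia. }
  assert (Hall := sumR_zero_all _ _ Hnn Hz).
  apply Hne. apply nth_ext with (d := 0%nat) (d' := 0%nat).
  unfold ones; rewrite repeat_length; auto.
  intros n Hn. rewrite Hlen in Hn. fold (kth k n). fold (kth (ones (S M)) n). rewrite kth_ones by lia.
  specialize (Hall n Hn). assert (0 < tau n) by (apply Htau; lia).
  assert (INR (kth k n) = 1) by nra. apply INR_eq. simpl. auto.
Qed.

Lemma phi11 x : phi 1 1 x = 1 - x ^ 2.
Proof. unfold phi, sumL. simpl. unfold C. simpl. field. Qed.
Lemma phi10 x : phi 1 0 x = x.
Proof. unfold phi, sumL. simpl. unfold C. simpl. field. Qed.
Lemma phi00 x : phi 0 0 x = 1.
Proof. unfold phi, sumL. simpl. unfold C. simpl. field. Qed.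

Definition psi (p q : nat) (t : R) : R :=
  sumL (seq (Nat.min 1 q) (S (Nat.min p q) - Nat.min 1 q))
   (fun b => C p b * C (q - Nat.min 1 q) (b - Nat.min 1 q) * (-1) ^ (q - b)
     * t ^ (2 * (Nat.min p q - b)) * (1 - t ^ 2) ^ b).

Lemma phi_psi p q t : phi p q t = t ^ ((p - q) + (q - p)) * psi p q t.
Proof.
  unfold phi, psi. rewrite <- sumL_scal. apply sumL_ext. intros b Hb.
  apply in_seq in Hb.
  assert (Hpw : (- t) ^ (q - b) * t ^ (p - b) =
     (-1) ^ (q - b) * (t ^ ((p - q) + (q - p)) * t ^ (2 * (Nat.min p q - b)))).
  { rewrite <- pow_add.
    replace ((p - q) + (q - p) + 2 * (Nat.min p q - b))%nat with ((q - b) + (p - b))%nat by lia.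
    rewrite pow_add. replace (- t) with ((-1) * t) by ring. rewrite Rpow_mult_distr. ring. }
  set (X := (1 - t ^ 2) ^ b).
  transitivity (C p b * C (q - Nat.min 1 q) (b - Nat.min 1 q) * ((- t) ^ (q - b) * t ^ (p - b)) * X).
  ring. rewrite Hpw. ring.
Qed.

Lemma sumL_zero {A} (l : list A) f : (forall x, In x l -> f x = 0) -> sumL l f = 0.
Proof. induction l; intros H; unfold sumL in *; simpl. auto. rewrite H by (left; auto). rewrite IHl. ring.
  intros; apply H; right; auto. Qed.

Lemma psi0 p q : (Nat.min 1 q <= Nat.min p q)%nat ->
  psi p q 0 = (-1) ^ (q - p) * (C p (Nat.min p q) * C (q - Nat.min 1 q) (Nat.min p q - Nat.min 1 q)).
Proof.
  intros Hum. unfold psi.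
  set (u := Nat.min 1 q). set (m := Nat.min p q). fold u m in Hum.
  replace (S m - u)%nat with (S (m - u)) by lia. rewrite seq_S.
  replace (u + (m - u))%nat with m by lia.
  rewrite sumL_app. rewrite sumL_zero.
  - unfold sumL; simpl. rewrite Nat.sub_diag. simpl.
    replace (q - m)%nat with (q - p)%nat by (unfold m; lia).
    replace (1 - 0 * (0 * 1)) with 1 by ring. rewrite pow1. ring.
  - intros b Hb. apply in_seq in Hb. replace (2 * (m - b))%nat with (S (2 * (m - b) - 1)) by lia.
    simpl. ring.
Qed.

Fixpoint sumN (d : nat) (f : nat -> nat) : nat :=
  match d with O => O | S d' => (sumN d' f + f d')%nat end.

Lemma prodR_pow d t f : prodR d (fun n => t ^ (f n)) = t ^ (sumN d f).
Proof. induction d. reflexivity. rewrite prodR_S, IHd. simpl. rewrite pow_add. ring. Qed.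

Lemma sumN_plus d f g : sumN d (fun n => f n + g n)%nat = (sumN d f + sumN d g)%nat.
Proof. induction d; simpl; auto. rewrite IHd. lia. Qed.

Lemma telescope f d : (sumN d (fun n => f (S n) - f n) + f O = sumN d (fun n => f n - f (S n)) + f d)%nat.
Proof. induction d; simpl. lia. lia. Qed.

Lemma nat_unbounded r : exists n : nat, r < INR n.
Proof.
  destruct (archimed r) as [H1 _].
  exists (Z.abs_nat (up r)). rewrite INR_IZR_INZ. rewrite Nat2Z.inj_abs_nat.
  apply Rlt_le_trans with (IZR (up r)); auto. apply IZR_le. lia.
Qed.

Definition inI (l h t : R) : R := if Rle_dec l t then if Rle_dec t h then 1 else 0 else 0.

Lemma inI_nonneg l h t : 0 <= inI l h t.
Proof. unfold inI; repeat destruct Rle_dec; lra. Qed.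

Lemma inI_in l h t : l <= t <= h -> inI l h t = 1.
Proof. intros H; unfold inI; repeat destruct Rle_dec; lra. Qed.

Lemma inI_enl l h t s dl : 0 < dl -> Rabs (s - t) < dl -> inI l h t <= inI (l - dl) (h + dl) s.
Proof.
  intros Hd Hs. apply Rabs_def2 in Hs. unfold inI; repeat destruct Rle_dec; lra.
Qed.

Lemma count_grid l h dl : 0 < dl -> forall N a,
  dl * sumR (S N) (fun m => inI l h (a + INR m * dl)) <= Rmax 0 (h - Rmax a l + dl).
Proof.
  intros Hd N. induction N; intros a.
  - unfold sumR; simpl. rewrite Rmult_0_l, Rplus_0_r, Rplus_0_r.
    unfold inI, Rmax; repeat destruct Rle_dec; lra.
  - rewrite sumR_shift.
    rewrite (sumR_ext _ _ (fun m => inI l h ((a + dl) + INR m * dl))).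
    2:{ intros i _. rewrite S_INR. f_equal. ring. }
    specialize (IHN (a + dl)).
    simpl INR. rewrite Rmult_0_l, Rplus_0_r.
    rewrite Rmult_plus_distr_l.
    unfold inI in *; unfold Rmax in *; repeat destruct Rle_dec; lra.
Qed.

Lemma sumR_const n c : sumR n (fun _ => c) = INR n * c.
Proof. induction n. unfold sumR; simpl; ring. rewrite sumR_S, IHn, S_INR. ring. Qed.

Lemma FG a b n (l h w : nat -> R) D : a < b -> (forall j, l j <= h j) -> (forall j, 0 <= w j) ->
  (forall s, a <= s <= b -> D <= sumR n (fun j => w j * inI (l j) (h j) s)) ->
  D * (b - a) <= sumR n (fun j => w j * (h j - l j)).
Proof.
  intros Hab Hlh Hw HD.
  set (X := sumR n (fun j => w j * (h j - l j))).
  assert (HX : 0 <= X) by (apply sumR_nonneg; intros; apply Rmult_le_pos; auto; specialize (Hlh i); lra).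
  destruct (Rle_dec D 0). { assert (D * (b - a) <= 0) by nra. lra. }
  apply Rnot_le_lt in n0.
  destruct (Rle_dec (D * (b - a)) X) as [Hok|Hbad]; auto.
  exfalso. apply Rnot_le_lt in Hbad.
  set (W := sumR n w).
  assert (HW : 0 <= W) by (apply sumR_nonneg; auto).
  destruct (nat_unbounded ((W + 1) * (b - a) / (D * (b - a) - X))) as [N HN].
  assert (HNpos : 0 < INR N).
  { apply Rle_lt_trans with ((W + 1) * (b - a) / (D * (b - a) - X)); auto.
    apply Rmult_le_pos. apply Rmult_le_pos; lra. left; apply Rinv_0_lt_compat; lra. }
  set (dl := (b - a) / INR N).
  assert (Hdl : 0 < dl) by (unfold dl; apply Rdiv_lt_0_compat; lra).
  assert (HNdl : INR N * dl = b - a) by (unfold dl; field; lra).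
  set (T := sumR (S N) (fun m => sumR n (fun j => w j * inI (l j) (h j) (a + INR m * dl)))).
  assert (HT1 : INR (S N) * D <= T).
  { rewrite <- sumR_const. apply sumR_le. intros m Hm. apply HD.
    split. assert (0 <= INR m * dl) by (apply Rmult_le_pos; [apply pos_INR| lra]). lra.
    assert (INR m <= INR N) by (apply le_INR; lia).
    assert (INR m * dl <= INR N * dl) by (apply Rmult_le_compat_r; lra). lra. }
  assert (HT2 : dl * T <= X + dl * W).
  { unfold T. rewrite sumR_swap.
    rewrite <- sumR_scal.
    unfold X, W. rewrite <- sumR_scal, <- sumR_plus. apply sumR_le. intros j Hj.
    rewrite sumR_scal.
    pose proof (count_grid (l j) (h j) dl Hdl N a) as Hc.
    assert (Rmax 0 (h j - Rmax a (l j) + dl) <= h j - l j + dl).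
    { pose proof (Hlh j). pose proof (Rmax_r a (l j)). unfold Rmax at 1; destruct Rle_dec; lra. }
    assert (dl * (w j * sumR (S N) (fun m => inI (l j) (h j) (a + INR m * dl))) =
            w j * (dl * sumR (S N) (fun m => inI (l j) (h j) (a + INR m * dl)))) by ring.
    rewrite H0.
    assert (w j * (dl * sumR (S N) (fun m => inI (l j) (h j) (a + INR m * dl))) <= w j * (h j - l j + dl)).
    { apply Rmult_le_compat_l; auto. lra. }
    lra. }
  rewrite S_INR in HT1.
  assert (dl * ((INR N + 1) * D) <= dl * T) by (apply Rmult_le_compat_l; lra).
  assert (Hk : (b - a) * D + dl * D <= X + dl * W).
  { rewrite <- HNdl. nra. }
  assert (Hc : (W + 1) * (b - a) < INR N * (D * (b - a) - X)).
  { apply (Rmult_lt_compat_r (D * (b - a) - X)) in HN; [|lra].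
    unfold Rdiv in HN. rewrite Rmult_assoc, Rinv_l in HN by lra. lra. }
  assert (dl * (W + 1) < D * (b - a) - X).
  { unfold dl. apply Rmult_lt_reg_l with (INR N); auto.
    replace (INR N * ((b - a) / INR N * (W + 1))) with ((W + 1) * (b - a)) by (field; lra). lra. }
  nra.
Qed.

Lemma CPT a b (G : nat -> R -> Prop) : a <= b ->
  (forall n m s, (n <= m)%nat -> G n s -> G m s) ->
  (forall t, a <= t <= b -> exists n rho, 0 < rho /\ forall s, Rabs (s - t) < rho -> G n s) ->
  exists N, forall s, a <= s <= b -> G N s.
Proof.
  intros Hab Hmono Hloc.
  set (A := fun x => a <= x <= b /\ exists N, forall s, a <= s <= x -> G N s).
  assert (HAa : A a).
  { split. lra. destruct (Hloc a) as [n [rho [Hr Hs]]]. lra.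
    exists n. intros s Hs'. apply Hs. replace (s - a) with 0 by lra. rewrite Rabs_R0; auto. }
  assert (Hb : bound A) by (exists b; intros x [Hx _]; lra).
  destruct (completeness A Hb (ex_intro _ a HAa)) as [sig [Hub Hlub]].
  assert (Hsa : a <= sig) by (apply Hub; auto).
  assert (Hsb : sig <= b) by (apply Hlub; intros x [Hx _]; lra).
  destruct (Hloc sig) as [n0 [rho [Hr Hs0]]]. lra.
  assert (Hx : exists x, A x /\ sig - rho / 2 < x).
  { apply Classical_Prop.NNPP. intros Hn.
    assert (sig <= sig - rho / 2). { apply Hlub. intros x Ax.
      apply Rnot_lt_le. intros Hlt. apply Hn. exists x; auto. } lra. }
  destruct Hx as [x [[Hx1 [N1 HN1]] Hx2]].
  set (N' := Nat.max N1 n0).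
  assert (Hclaim : forall s, a <= s <= sig + rho / 2 -> G N' s).
  { intros s Hs. destruct (Rle_dec s x).
    - apply Hmono with N1. lia. apply HN1; lra.
    - apply Hmono with n0. lia. apply Hs0. apply Rabs_def1; lra. }
  exists N'. intros s Hs.
  destruct (Rle_dec b (sig + rho / 2)). apply Hclaim; lra.
  exfalso. assert (A (sig + rho / 2)). { split. lra. exists N'. intros; apply Hclaim; lra. }
  assert (sig + rho / 2 <= sig) by (apply Hub; auto). lra.
Qed.

Fixpoint minR (n : nat) (f : nat -> R) : R :=
  match n with O => 1 | S n' => Rmin (minR n' f) (f n') end.

Lemma minR_pos n f : (forall j, 0 < f j) -> 0 < minR n f.
Proof. intros H; induction n; simpl. lra. unfold Rmin; destruct Rle_dec; auto. Qed.

Lemma minR_le n f j : (j < n)%nat -> minR n f <= f j.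
Proof.
  induction n; intros Hj. lia. simpl. destruct (Nat.eq_dec j n). subst. apply Rmin_r.
  apply Rle_trans with (minR n f). apply Rmin_l. apply IHn; lia.
Qed.

Lemma geom_sum N : sumR N (fun j => (/2) ^ j) = 2 - 2 * (/2) ^ N.
Proof. induction N. unfold sumR; simpl; field. rewrite sumR_S, IHN. simpl. field. Qed.

Lemma WC1 a b (l h w : nat -> R) D : a <= b -> (forall j, l j <= h j) -> (forall j, 0 <= w j) ->
  (forall t, a <= t <= b -> forall eps, 0 < eps -> exists n, D - eps <= sumR n (fun j => w j * inI (l j) (h j) t)) ->
  forall eps, 0 < eps -> exists n, D * (b - a) - eps <= sumR n (fun j => w j * (h j - l j)).
Proof.
  intros Hab Hlh Hw Hpt eps Heps.
  destruct (Req_dec a b) as [Heq|Hne].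
  { exists O. subst. rewrite sumR_0. lra. }
  assert (Hlt : a < b) by lra.
  set (e1 := eps / (2 * (b - a))).
  assert (He1 : 0 < e1) by (unfold e1; apply Rdiv_lt_0_compat; lra).
  set (dl := fun j => eps / 8 * (/2) ^ j / (w j + 1)).
  assert (Hdl : forall j, 0 < dl j).
  { intros j. unfold dl. apply Rdiv_lt_0_compat. apply Rmult_lt_0_compat. lra.
    apply pow_lt; lra. specialize (Hw j); lra. }
  set (G := fun n s => D - e1 <= sumR n (fun j => w j * inI (l j - dl j) (h j + dl j) s)).
  destruct (CPT a b G Hab) as [N HN].
  { intros n m s Hnm HG. unfold G in *. eapply Rle_trans. apply HG. apply sumR_mono_n; auto.
    intros i. apply Rmult_le_pos; auto. apply inI_nonneg. }
  { intros t Ht. destruct (Hpt t Ht e1 He1) as [n Hn].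
    exists n, (minR n dl). split. apply minR_pos; auto.
    intros s Hs. unfold G. eapply Rle_trans. apply Hn. apply sumR_le. intros j Hj.
    apply Rmult_le_compat_l; auto. apply inI_enl; auto.
    eapply Rlt_le_trans. apply Hs. apply minR_le; auto. }
  pose proof (FG a b N (fun j => l j - dl j) (fun j => h j + dl j) w (D - e1) Hlt) as HF.
  assert (HF' : (D - e1) * (b - a) <= sumR N (fun j => w j * (h j + dl j - (l j - dl j)))).
  { apply HF; auto. intros j. specialize (Hlh j); specialize (Hdl j); lra. }
  assert (Hsplit : sumR N (fun j => w j * (h j + dl j - (l j - dl j))) =
                   sumR N (fun j => w j * (h j - l j)) + sumR N (fun j => 2 * w j * dl j)).
  { rewrite <- sumR_plus. apply sumR_ext. intros; ring. }
  assert (Hsmall : sumR N (fun j => 2 * w j * dl j) <= eps / 2).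
  { apply Rle_trans with (sumR N (fun j => eps / 4 * (/2) ^ j)).
    - apply sumR_le. intros j _. unfold dl.
      assert (0 <= w j) by auto. assert (0 < (/2) ^ j) by (apply pow_lt; lra).
      replace (2 * w j * (eps / 8 * (/ 2) ^ j / (w j + 1))) with
        (eps / 4 * (/2) ^ j * (w j / (w j + 1))) by (field; lra).
      rewrite <- (Rmult_1_r (eps / 4 * (/2) ^ j)) at 2.
      apply Rmult_le_compat_l. apply Rmult_le_pos; lra.
      apply Rmult_le_reg_r with (w j + 1). lra. unfold Rdiv. rewrite Rmult_assoc, Rinv_l by lra. lra.
    - rewrite sumR_scal, geom_sum. assert (0 < (/2) ^ N) by (apply pow_lt; lra). nra. }
  exists N. unfold e1 in HF'.
  replace ((D - eps / (2 * (b - a))) * (b - a)) with (D * (b - a) - eps / 2) in HF' by (field; lra).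
  lra.
Qed.

Definition inB d (lo hi x : nat -> R) : R := prodR d (fun i => inI (lo i) (hi i) (x i)).

Lemma box_vol_nonneg d lo hi : (forall i, (i < d)%nat -> lo i <= hi i) -> 0 <= box_vol d lo hi.
Proof. intros H. apply prodR_nonneg. intros i Hi. specialize (H i Hi). lra. Qed.

Lemma WC : forall d (a b : nat -> R) (lo hi : nat -> nat -> R) (c : nat -> R) Cc,
  (forall i, (i < d)%nat -> a i <= b i) -> (forall j i, (i < d)%nat -> lo j i <= hi j i) ->
  (forall j, 0 <= c j) ->
  (forall x, (forall i, (i < d)%nat -> a i <= x i <= b i) -> forall eps, 0 < eps ->
      exists n, Cc - eps <= sumR n (fun j => c j * inB d (lo j) (hi j) x)) ->
  forall eps, 0 < eps -> exists n, Cc * box_vol d a b - eps <= sumR n (fun j => c j * box_vol d (lo j) (hi j)).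
Proof.
  induction d; intros a b lo hi c Cc Hab Hlh Hc Hpt.
  - intros eps Heps. destruct (Hpt a (fun i Hi => ltac:(lia)) eps Heps) as [n Hn]. exists n.
    eapply Rle_trans; [|eapply Rle_trans; [apply Hn|]].
    + unfold box_vol. rewrite prodR_0. lra.
    + right. apply sumR_ext. intros; reflexivity.
  - intros eps Heps.
    assert (H1 := WC1 (a d) (b d) (fun j => lo j d) (fun j => hi j d)
                  (fun j => c j * box_vol d (lo j) (hi j)) (Cc * box_vol d a b)).
    destruct (H1 (Hab d ltac:(lia)) (fun j => Hlh j d ltac:(lia))) with (eps := eps) as [n Hn]; auto.
    + intros j. apply Rmult_le_pos; auto. apply box_vol_nonneg. intros; apply Hlh; lia.
    + intros t Ht e He.
      destruct (IHd a b lo hi (fun j => c j * inI (lo j d) (hi j d) t) Cc) with (eps := e) as [n Hn].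
      * intros; apply Hab; lia.
      * intros; apply Hlh; lia.
      * intros j. apply Rmult_le_pos; auto. apply inI_nonneg.
      * intros x Hx e' He'.
        set (x' := fun i => if (i <? d)%nat then x i else t).
        destruct (Hpt x') with (eps := e') as [n Hn]; auto.
        { intros i Hi. unfold x'. destruct (Nat.ltb_spec i d). apply Hx; auto.
          assert (i = d) by lia. subst. auto. }
        exists n. eapply Rle_trans. apply Hn. right. apply sumR_ext. intros j _.
        unfold inB. rewrite prodR_S. unfold x' at 2. rewrite Nat.ltb_irrefl.
        rewrite (prodR_ext d _ (fun i => inI (lo j i) (hi j i) (x i))). ring.
        intros i Hi. unfold x'. destruct (Nat.ltb_spec i d); [reflexivity| lia].
      * exact He.
      * exists n. eapply Rle_trans. apply Hn. right. apply sumR_ext. intros; ring.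
    + exists n. unfold box_vol in *. rewrite prodR_S.
      replace (Cc * (prodR d (fun i => b i - a i) * (b d - a d)))
        with (Cc * prodR d (fun i => b i - a i) * (b d - a d)) by ring.
      eapply Rle_trans. apply Hn. right. apply sumR_ext. intros j _. rewrite prodR_S. ring.
Qed.

Lemma prodR_one n : prodR n (fun _ => 1) = 1.
Proof. induction n. reflexivity. rewrite prodR_S, IHn. ring. Qed.

Lemma box_pos_measure d (a : nat -> R) eta (E : (nat -> R) -> Prop) : 0 < eta ->
  (forall x, (forall i, (i < d)%nat -> a i - eta <= x i <= a i + eta) -> E x) ->
  positive_outer_measure d E.
Proof.
  intros Heta HE.
  set (V := box_vol d (fun i => a i - eta) (fun i => a i + eta)).
  assert (HV : 0 < V) by (apply prodR_pos; intros; lra).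
  exists (V / 2). split. lra.
  intros lo hi Hlh Hcov.
  destruct (WC d (fun i => a i - eta) (fun i => a i + eta) lo hi (fun _ => 1) 1) with (eps := V / 2)
    as [n Hn].
  - intros; lra.
  - auto.
  - intros; lra.
  - intros x Hx e He. destruct (Hcov x (HE x Hx)) as [j Hj].
    exists (S j). eapply Rle_trans. 2: apply sumR_ge_term with (j := j).
    + unfold inB. rewrite (prodR_ext _ _ (fun _ => 1)). rewrite prodR_one. lra.
      intros i Hi. apply inI_in. auto.
    + lia.
    + intros. rewrite Rmult_1_l. apply prodR_nonneg. intros; apply inI_nonneg.
  - lra.
  - exists n. fold V in Hn. eapply Rle_trans. 2: eapply Rle_trans. 2: apply Hn. lra.
    right. apply sumR_ext. intros; ring.
Qed.
From Coquelicot Require Import Hierarchy Continuity.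
Open Scope R_scope.

Definition tends {T} (F : (T -> Prop) -> Prop) (f : T -> R) (v : R) := filterlim f F (locally v).

Section Tends.
Context {T : Type} {F : (T -> Prop) -> Prop} {FF : Filter F}.

Lemma tends_const c : tends F (fun _ => c) c.
Proof. apply filterlim_const. Qed.

Lemma tends_plus f g a b : tends F f a -> tends F g b -> tends F (fun z => f z + g z) (a + b).
Proof. intros Hf Hg. unfold tends.
  apply (filterlim_comp_2 f g (fun x y => plus x y) Hf Hg). apply (filterlim_plus a b). Qed.

Lemma tends_mult f g a b : tends F f a -> tends F g b -> tends F (fun z => f z * g z) (a * b).
Proof. intros Hf Hg. unfold tends.
  apply (filterlim_comp_2 f g (fun x y => mult x y) Hf Hg). apply (filterlim_mult a b). Qed.

Lemma tends_ext f g a : (forall z, f z = g z) -> tends F f a -> tends F g a.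
Proof. intros H Hf. unfold tends. apply filterlim_ext with f; auto. Qed.

Lemma tends_eqv f a b : a = b -> tends F f a -> tends F f b.
Proof. intros ->; auto. Qed.

Lemma tends_opp f a : tends F f a -> tends F (fun z => - f z) (- a).
Proof. intros Hf. apply tends_eqv with ((-1) * a). ring.
  apply tends_ext with (fun z => (-1) * f z). intros; ring.
  apply tends_mult; auto. apply tends_const. Qed.

Lemma tends_minus f g a b : tends F f a -> tends F g b -> tends F (fun z => f z - g z) (a - b).
Proof. intros. apply tends_plus; auto. apply tends_opp; auto. Qed.

Lemma tends_pow f a n : tends F f a -> tends F (fun z => f z ^ n) (a ^ n).
Proof. intros Hf. induction n. apply tends_const. simpl. apply tends_mult; auto. Qed.

Lemma tends_sumL {A} (l : list A) (f : A -> T -> R) (v : A -> R) :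
  (forall x, In x l -> tends F (f x) (v x)) ->
  tends F (fun z => sumL l (fun x => f x z)) (sumL l v).
Proof.
  induction l; intros H. apply tends_const.
  unfold sumL; simpl. apply tends_plus. apply H; left; auto.
  apply IHl. intros; apply H; right; auto.
Qed.

Lemma tends_prodR n (f : nat -> T -> R) (v : nat -> R) :
  (forall i, (i < n)%nat -> tends F (f i) (v i)) ->
  tends F (fun z => prodR n (fun i => f i z)) (prodR n v).
Proof.
  induction n; intros H. apply tends_const.
  apply tends_ext with (fun z => prodR n (fun i => f i z) * f n z). intros; rewrite prodR_S; auto.
  rewrite prodR_S. apply tends_mult. apply IHn; intros; apply H; lia. apply H; lia.
Qed.

Lemma tends_phi p q g a : tends F g a -> tends F (fun z => phi p q (g z)) (phi p q a).
Proof.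
  intros Hg. unfold phi. apply tends_sumL. intros b _.
  repeat apply tends_mult; try apply tends_const; apply tends_pow; auto.
  apply tends_opp; auto. apply tends_minus. apply tends_const. apply tends_pow; auto.
Qed.

Lemma tends_psi p q g a : tends F g a -> tends F (fun z => psi p q (g z)) (psi p q a).
Proof.
  intros Hg. unfold psi. apply tends_sumL. intros b _.
  repeat apply tends_mult; try apply tends_const; apply tends_pow; auto.
  apply tends_minus. apply tends_const. apply tends_pow; auto.
Qed.

Lemma tends_get f a eps : tends F f a -> 0 < eps -> F (fun z => Rabs (f z - a) < eps).
Proof.
  intros Hf He. apply (proj1 (filterlim_locally f a)) with (eps := mkposreal eps He) in Hf.
  eapply filter_imp. 2: apply Hf. intros z Hz. exact Hz.
Qed.
End Tends.

Lemma tends_id_loc (t : R) : tends (locally t) (fun x => x) t.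
Proof. unfold tends. apply filterlim_id. Qed.

Definition nbF (M : nat) (c : nat -> R) (P : (nat -> R) -> Prop) : Prop :=
  exists dl : posreal, forall x, (forall i, (i <= M)%nat -> Rabs (x i - c i) < dl) -> P x.

Global Instance nbF_filter M c : Filter (nbF M c).
Proof.
  constructor.
  - exists (mkposreal 1 Rlt_0_1). auto.
  - intros P Q [d1 H1] [d2 H2].
    assert (Hd : 0 < Rmin d1 d2) by (apply Rmin_pos; apply cond_pos).
    exists (mkposreal _ Hd). simpl. intros x Hx. split.
    apply H1; intros; eapply Rlt_le_trans; [apply Hx; auto| apply Rmin_l].
    apply H2; intros; eapply Rlt_le_trans; [apply Hx; auto| apply Rmin_r].
  - intros P Q HPQ [d H]. exists d. auto.
Qed.

Lemma tends_coord M c i : (i <= M)%nat -> tends (nbF M c) (fun x => x i) (c i).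
Proof.
  intros Hi. unfold tends. apply (proj2 (filterlim_locally _ _)). intros eps.
  exists eps. intros x Hx. apply Hx; auto.
Qed.

Lemma ball_R x e y : Rabs (y - x) < e -> ball x e y.
Proof. intros H. unfold ball; simpl. unfold AbsRing_ball, abs, minus, plus, opp; simpl. exact H. Qed.

Lemma ampl_ones M R' x y : (forall n, (n <= M)%nat -> R' n = x n) -> R' (S M) = y ->
  ampl R' (ones (S M)) = prodR (S M) (fun n => 1 - x n ^ 2) * y.
Proof.
  intros Hx Hy. rewrite ampl_prod. unfold ones at 1. rewrite repeat_length. fold (ones (S M)).
  rewrite prodR_S. rewrite kth_ones by lia. rewrite kth_ones_out by lia. rewrite Hy, phi10.
  f_equal. apply prodR_ext. intros n Hn. rewrite !kth_ones by lia. rewrite Hx by lia. apply phi11.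
Qed.

Lemma ampl_k M R' x k : length k = S (S M) -> kth k (S M) = 0%nat ->
  (forall n, (n <= M)%nat -> R' n = x n) ->
  ampl R' k = prodR (S M) (fun n => phi (kth k n) (kth k (S n)) (x n)).
Proof.
  intros Hl Hk Hx. rewrite ampl_prod, Hl, prodR_S, Hk.
  assert (kth k (S (S M)) = 0%nat) by (unfold kth; apply nth_beyond; lia).
  rewrite H, phi00, Rmult_1_r. apply prodR_ext. intros n Hn. rewrite Hx by lia. auto.
Qed.

Lemma list_min {A} (l : list A) (f : A -> nat) : l <> nil ->
  exists x, In x l /\ forall y, In y l -> (f x <= f y)%nat.
Proof.
  induction l as [|a l IH]; intros H. congruence.
  destruct l as [|b l']. exists a. split. left; auto. intros y [<-|[]]. lia.
  destruct IH as [x [Hx Hm]]. congruence.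
  destruct (le_lt_dec (f a) (f x)).
  - exists a. split. left; auto. intros y [<-|Hy]. lia. specialize (Hm y Hy). lia.
  - exists x. split. right; auto. intros y [<-|Hy]. lia. auto.
Qed.

Lemma sumL_nonneg {A} (l : list A) w : (forall x, In x l -> 0 <= w x) -> 0 <= sumL l w.
Proof.
  induction l; intros H; unfold sumL in *; simpl. lra.
  assert (0 <= w a) by (apply H; left; auto).
  assert (0 <= fold_right Rplus 0 (map w l)) by (apply IHl; intros; apply H; right; auto). lra.
Qed.

Lemma sumL_pos {A} (l : list A) w x0 : (forall x, In x l -> 0 <= w x) -> In x0 l -> 0 < w x0 -> 0 < sumL l w.
Proof.
  induction l; intros H Hin Hp. destruct Hin.
  assert (0 <= sumL l w) by (apply sumL_nonneg; intros; apply H; right; auto).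
  unfold sumL in *; simpl.
  destruct Hin as [<-|Hin]. lra.
  assert (0 <= w a) by (apply H; left; auto).
  assert (0 < fold_right Rplus 0 (map w l)). apply IHl; auto. intros; apply H; right; auto. lra.
Qed.

Definition Pk M k r := prodR (S M) (fun n => phi (kth k n) (kth k (S n)) (r n)).
Definition Ek M k := sumN (S M) (fun n => (kth k n - kth k (S n)) + (kth k (S n) - kth k n))%nat.
Definition Uk M k := sumN (S M) (fun n => kth k (S n) - kth k n)%nat.
Definition Psi M k t := prodR (S M) (fun n => psi (kth k n) (kth k (S n)) t).
Definition posk M k := prodR (S M) (fun n =>
   C (kth k n) (Nat.min (kth k n) (kth k (S n))) *
   C (kth k (S n) - Nat.min 1 (kth k (S n))) (Nat.min (kth k n) (kth k (S n)) - Nat.min 1 (kth k (S n)))).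

Lemma Pk_diag M k t : Pk M k (fun _ => t) = t ^ (Ek M k) * Psi M k t.
Proof.
  unfold Pk, Ek, Psi. rewrite <- prodR_pow, <- prodR_mult. apply prodR_ext. intros; apply phi_psi.
Qed.

Lemma Psi0 M k : (forall n, (n <= M)%nat -> (Nat.min 1 (kth k (S n)) <= Nat.min (kth k n) (kth k (S n)))%nat) ->
  Psi M k 0 = (-1) ^ (Uk M k) * posk M k.
Proof.
  intros H. unfold Psi, Uk, posk. rewrite <- prodR_pow, <- prodR_mult. apply prodR_ext.
  intros n Hn. apply psi0. apply H. lia.
Qed.

Lemma posk_pos M k : 0 < posk M k.
Proof. apply prodR_pos. intros. apply Rmult_lt_0_compat; apply C_pos. Qed.

Lemma Ek_Uk M k : kth k 0 = 1%nat -> kth k (S M) = 0%nat -> Ek M k = (2 * Uk M k + 1)%nat.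
Proof.
  intros H0 H1. unfold Ek, Uk. rewrite sumN_plus.
  pose proof (telescope (kth k) (S M)) as T. rewrite H0, H1 in T. lia.
Qed.

Theorem lemma3p1 (M : nat) (HM : (1 <= M)%nat) (tau : nat -> R)
  (Htau : forall n, (n <= S M)%nat -> 0 < tau n)
  (S_ : list (list nat)) (HSnodup : NoDup S_)
  (HS : forall k, In k S_ <->
          (inLtau (S M) tau k /\ k <> ones (S M) /\ dotk k tau = dotk (ones (S M)) tau))
  (HSne : S_ <> nil) :
  positive_outer_measure (S M)
    (fun r : nat -> R =>
       (forall n, (n <= M)%nat -> -1 < r n < 1) /\
       exists rM1 : R, rM1 <> 0 /\ -1 < rM1 < 1 /\
         let R' := fun n => if (n <=? M)%nat then r n else rM1 in
         ampl R' (ones (S M)) + sumL S_ (fun k => ampl R' k) = 0).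
Proof.
  assert (HSk : forall k, In k S_ -> length k = S (S M) /\ kth k 0 = 1%nat /\ kth k (S M) = 0%nat /\
     (forall n, (n <= M)%nat -> (Nat.min 1 (kth k (S n)) <= Nat.min (kth k n) (kth k (S n)))%nat)).
  { intros k Hk. apply HS in Hk. destruct Hk as [[HL Hle] [Hne Hdot]].
    pose proof (last_zero M tau k Htau HL Hne Hdot) as Hl0.
    destruct HL as [Hlen [H0 HLc]]. repeat split; auto.
    intros n Hn. destruct (Nat.eq_dec (kth k (S n)) 0) as [E0|E0]. rewrite E0. lia.
    pose proof (HLc (S n) ltac:(lia)) as Hx. replace (S n - 1)%nat with n in Hx by lia.
    assert (0 < kth k n)%nat by (apply Hx; lia). lia. }
  destruct (list_min S_ (Ek M) HSne) as [k0 [Hk0 Hmin]].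
  set (Em := Ek M k0). set (Um := Uk M k0).
  set (H := fun t => sumL S_ (fun k => t ^ (Ek M k - Em) * Psi M k t)).
  set (Qf := fun r => sumL S_ (fun k => Pk M k r)).
  set (Af := fun r : nat -> R => prodR (S M) (fun n => 1 - r n ^ 2)).
  assert (HEU : forall k, In k S_ -> Ek M k = (2 * Uk M k + 1)%nat).
  { intros k Hk. destruct (HSk k Hk) as [_ [H0 [H1 _]]]. apply Ek_Uk; auto. }
  assert (HQd : forall t, Qf (fun _ => t) = t ^ Em * H t).
  { intros t. unfold Qf, H. rewrite <- sumL_scal. apply sumL_ext. intros k Hk. rewrite Pk_diag.
    specialize (Hmin k Hk). assert (Heq : Ek M k = (Em + (Ek M k - Em))%nat) by (unfold Em; lia).
    rewrite Heq at 1. rewrite pow_add. ring. }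
  assert (HH0 : H 0 = (-1) ^ Um * sumL S_ (fun k => if Nat.eq_dec (Ek M k) Em then posk M k else 0)).
  { unfold H. rewrite <- sumL_scal. apply sumL_ext. intros k Hk. destruct Nat.eq_dec as [e|ne].
    - rewrite e, Nat.sub_diag, pow_O, Psi0 by (apply HSk; auto).
      assert (Uk M k = Um) by (pose proof (HEU k Hk); pose proof (HEU k0 Hk0); unfold Em, Um in *; lia).
      rewrite H0; ring.
    - specialize (Hmin k Hk). replace (Ek M k - Em)%nat with (S (Ek M k - Em - 1)) by (unfold Em in *; lia).
      simpl. ring. }
  assert (HH0nz : H 0 <> 0).
  { rewrite HH0. apply Rmult_integral_contrapositive. split. apply pow_nonzero; lra.
    apply Rgt_not_eq. apply (sumL_pos _ _ k0).
    - intros k _. destruct Nat.eq_dec. left; apply posk_pos. lra.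
    - auto.
    - destruct Nat.eq_dec as [e|ne]. apply posk_pos. exfalso; apply ne; reflexivity. }
  assert (TH : tends (locally 0) H (H 0)).
  { unfold H. apply tends_sumL. intros k _. apply tends_mult. apply tends_pow. apply tends_id_loc.
    unfold Psi. apply tends_prodR. intros i _. apply tends_psi. apply tends_id_loc. }
  assert (TQ : tends (locally 0) (fun t => Qf (fun _ => t)) (Qf (fun _ => 0))).
  { unfold Qf. apply tends_sumL. intros k _. unfold Pk. apply tends_prodR. intros i _.
    apply tends_phi. apply tends_id_loc. }
  assert (HQ0 : Qf (fun _ => 0) = 0).
  { rewrite HQd. rewrite pow_i. ring. unfold Em. rewrite (HEU k0 Hk0). lia. }
  assert (TA : tends (locally 0) (fun t => Af (fun _ => t)) (Af (fun _ => 0))).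
  { unfold Af. apply tends_prodR. intros i _. apply tends_minus. apply tends_const.
    apply tends_pow. apply tends_id_loc. }
  assert (HA0 : Af (fun _ => 0) = 1).
  { unfold Af. rewrite (prodR_ext _ _ (fun _ => 1)). apply prodR_one. intros; simpl; ring. }
  assert (Hh : 0 < Rabs (H 0) / 2) by (apply Rabs_pos_lt in HH0nz; lra).
  assert (Hhalf : 0 < / 2) by lra.
  destruct (filter_and _ _ (tends_get _ _ _ TH Hh)
             (filter_and _ _ (tends_get _ _ _ TQ Hhalf) (tends_get _ _ _ TA Hhalf))) as [dl Hdl].
  set (t := Rmin dl 1 / 4).
  assert (Ht1 : 0 < t) by (unfold t; assert (0 < Rmin dl 1) by (apply Rmin_pos; [apply cond_pos|lra]); lra).
  assert (Ht2 : t <= 1 / 4) by (unfold t; pose proof (Rmin_r dl 1); lra).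
  assert (Ht3 : Rabs (t - 0) < dl).
  { rewrite Rminus_0_r, Rabs_right by lra. unfold t. pose proof (Rmin_l dl 1). pose proof (cond_pos dl). lra. }
  destruct (Hdl t (ball_R _ _ _ Ht3)) as [HHt [HQt HAt]].
  rewrite HQ0 in HQt. rewrite HA0 in HAt.
  assert (HHtnz : H t <> 0).
  { intros E0. rewrite E0 in HHt. rewrite Rminus_0_l, Rabs_Ropp in HHt. lra. }
  assert (HQtnz : Qf (fun _ => t) <> 0).
  { rewrite HQd. apply Rmult_integral_contrapositive. split; auto. apply pow_nonzero; lra. }
  set (rs := fun _ : nat => t).
  assert (TQm : tends (nbF M rs) Qf (Qf rs)).
  { unfold Qf. apply tends_sumL. intros k _. unfold Pk. apply tends_prodR. intros i Hi.
    apply tends_phi. apply (tends_coord M rs i). lia. }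
  assert (TAm : tends (nbF M rs) Af (Af rs)).
  { unfold Af. apply tends_prodR. intros i Hi. apply tends_minus. apply tends_const.
    apply tends_pow. apply (tends_coord M rs i). lia. }
  set (q := Rabs (Qf rs)). set (a := Af rs).
  assert (Hq : 0 < q) by (apply Rabs_pos_lt; exact HQtnz).
  assert (Hqa : q < a).
  { unfold q, a. apply Rabs_def2 in HQt. apply Rabs_def2 in HAt. rewrite Rminus_0_r in HQt.
    change (Qf (fun _ : nat => t)) with (Qf rs) in HQt. change (Af (fun _ : nat => t)) with (Af rs) in HAt. apply Rabs_def1; lra. }
  set (ep := Rmin q (a - q) / 2).
  assert (Hep : 0 < ep) by (unfold ep; assert (0 < Rmin q (a - q)) by (apply Rmin_pos; lra); lra).
  assert (Hep1 : ep <= q / 2) by (unfold ep; pose proof (Rmin_l q (a - q)); lra).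
  assert (Hep2 : ep <= (a - q) / 2) by (unfold ep; pose proof (Rmin_r q (a - q)); lra).
  destruct (filter_and _ _ (tends_get _ _ _ TQm Hep) (tends_get _ _ _ TAm Hep)) as [dl2 Hdl2].
  set (eta := Rmin dl2 (1/4) / 2).
  assert (Heta : 0 < eta) by (unfold eta; assert (0 < Rmin dl2 (1/4)) by (apply Rmin_pos; [apply cond_pos|lra]); lra).
  assert (Heta1 : eta < dl2) by (unfold eta; pose proof (Rmin_l dl2 (1/4)); pose proof (cond_pos dl2); lra).
  assert (Heta2 : eta <= 1/8) by (unfold eta; pose proof (Rmin_r dl2 (1/4)); lra).
  apply (box_pos_measure (S M) rs eta); auto.
  intros x Hx.
  assert (Hx' : forall i, (i <= M)%nat -> Rabs (x i - rs i) < dl2).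
  { intros i Hi. specialize (Hx i ltac:(lia)). apply Rabs_def1; lra. }
  destruct (Hdl2 x Hx') as [HQx HAx].
  fold q a in HQx, HAx.
  assert (HA1 : a - ep < Af x) by (apply Rabs_def2 in HAx; lra).
  assert (HQ1 : q - ep <= Rabs (Qf x)).
  { pose proof (Rabs_triang_inv (Qf rs) (Qf x)). rewrite Rabs_minus_sym in HQx. fold q in H0. lra. }
  assert (HQ2 : Rabs (Qf x) <= q + ep).
  { pose proof (Rabs_triang (Qf x - Qf rs) (Qf rs)). replace (Qf x - Qf rs + Qf rs) with (Qf x) in H0 by ring.
    fold q in H0. lra. }
  assert (HAxp : 0 < Af x) by lra.
  assert (HQxnz : Qf x <> 0). { intros E0. rewrite E0, Rabs_R0 in HQ1. lra. }
  assert (HQA : Rabs (Qf x) < Af x) by lra.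
  apply Rabs_def2 in HQA.
  split.
  { intros n Hn. specialize (Hx n ltac:(lia)). unfold rs in Hx. lra. }
  set (y := - Qf x / Af x).
  assert (Hy : y * Af x = - Qf x) by (unfold y; field; lra).
  exists y. split; [|split].
  - intros E0. rewrite E0 in Hy. apply HQxnz. lra.
  - split; nra.
  - intros R'.
    rewrite (ampl_ones M R' x y).
    2:{ intros n Hn. unfold R'. destruct (Nat.leb_spec n M); [reflexivity|lia]. }
    2:{ unfold R'. destruct (Nat.leb_spec (S M) M); [lia|reflexivity]. }
    rewrite (sumL_ext S_ _ (fun k => Pk M k x)).
    2:{ intros k Hk. destruct (HSk k Hk) as [Hl [_ [Hz _]]]. unfold Pk. apply ampl_k; auto.
        intros n Hn. unfold R'. destruct (Nat.leb_spec n M); [reflexivity|lia]. }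
    change (sumL S_ (fun k => Pk M k x)) with (Qf x).
    change (prodR (S M) (fun n => 1 - x n ^ 2)) with (Af x).
    lra.
Qed.
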